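(* Fix $s\in\mathbb{R}$ and a continuous $1$-periodic function $\tilde q$ with $\int_0^1\tilde q=0$. Suppose that for $\lambda$ in an open interval there are a real number $q_0(\lambda)$ and $1$-periodic $C^1$ functions $\tilde p(\lambda,\cdot)$ with $\int_0^1\tilde p(\lambda,x)\,dx=0$, depending differentiably on $\lambda$ (with $\partial_\lambda\tilde p$ and $\partial_\lambda\tilde p'$ continuous), such that \[ q_0(\lambda)=\lambda+\int_0^1\tilde p(\lambda,x)^2\,dx+s^2,\qquad \tilde q=\tilde p'+\tilde p^2-\int_0^1\tilde p^2+2s\tilde p \] (equivalently, $p=\tilde p+s$ is a periodic solution with $\int_0^1p=s$ of the Riccati equation $q_0+\tilde q=\lambda+p'+p^2$). Then $\frac{\partial q_0}{\partial\lambda}=1$; that is, the Jacobian of the transformation $(q_0,\tilde q,s)\mapsto(\lambda,\tilde q,s)$ is one. *)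

(* Defs.v *)
From Stdlib Require Import Reals.
From Coquelicot Require Export Coquelicot.
Open Scope R_scope.

Definition periodic1 (f : R -> R) : Prop := forall x, f (x + 1) = f x.

Definition isC1 (f : R -> R) : Prop :=
  forall x, ex_derive f x /\ continuous (Derive f) x.

Definition dlam (F : R -> R -> R) (l x : R) : R := Derive (fun m => F m x) l.

Definition dx (F : R -> R -> R) (l x : R) : R := Derive (F l) x.

Definition cont2 (G : R -> R -> R) (l x : R) : Prop :=
  continuous (fun z : R * R => G (fst z) (snd z)) (l, x).

(* Main.v *)
Require Import Defs.
From Stdlib Require Import Reals Lra.
From Coquelicot Require Import Coquelicot.
Open Scope R_scope.

Lemma loc_ab a b l : a < l < b -> locally l (fun m => a < m < b).
Proof.
  intros [H1 H2].
  assert (He : 0 < Rmin (l - a) (b - l)) by (apply Rmin_case; lra).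
  exists (mkposreal _ He). intros m Hm. simpl in Hm.
  unfold ball in Hm; simpl in Hm; unfold AbsRing_ball, abs, minus, plus, opp in Hm; simpl in Hm.
  apply Rabs_def2 in Hm. destruct Hm as [Ha Hb].
  revert Ha Hb; apply Rmin_case_strong; intros; lra.
Qed.

Lemma cont2_snd G l x : cont2 G l x -> continuous (G l) x.
Proof.
  intros H.
  apply (continuous_comp_2 (fun _ => l) (fun y => y) G).
  - apply continuous_const.
  - apply continuous_id.
  - exact H.
Qed.

Lemma cont2_2d G l x : cont2 G l x -> continuity_2d_pt G l x.
Proof. intros H. apply continuity_2d_pt_filterlim. exact H. Qed.

Section S.
Variables (s : R) (qt : R -> R) (a b : R) (q0 : R -> R) (pt : R -> R -> R)
  (Hpt_per : forall l, a < l < b -> periodic1 (pt l))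
  (Hpt_C1 : forall l, a < l < b -> isC1 (pt l))
  (Hpt_mean : forall l, a < l < b -> RInt (pt l) 0 1 = 0)
  (Hpt_dl : forall l x, a < l < b -> ex_derive (fun m => pt m x) l)
  (Hpt_dl_cont : forall l x, a < l < b -> cont2 (dlam pt) l x)
  (Hpt_dlx : forall l x, a < l < b -> ex_derive (fun m => dx pt m x) l)
  (Hpt_dlx_cont : forall l x, a < l < b -> cont2 (dlam (dx pt)) l x)
  (l : R) (Hl : a < l < b).

Let u := dlam pt l.
Let W := dlam (dx pt) l.

Lemma stepA m x : a < m < b -> pt m x = pt m 0 + RInt (dx pt m) 0 x.
Proof.
  intros Hm.
  assert (H := is_RInt_derive (pt m) (dx pt m) 0 x).
  assert (H' : is_RInt (dx pt m) 0 x (minus (pt m x) (pt m 0))).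
  { apply H.
    - intros t _. apply Derive_correct. apply (Hpt_C1 m Hm t).
    - intros t _. apply (Hpt_C1 m Hm t). }
  rewrite (is_RInt_unique _ _ _ _ H').
  unfold minus, plus, opp; simpl. ring.
Qed.

Lemma u_cont x : continuous u x.
Proof. apply cont2_snd. apply Hpt_dl_cont; auto. Qed.
Lemma W_cont x : continuous W x.
Proof. apply cont2_snd. apply Hpt_dlx_cont; auto. Qed.

Lemma stepB x : u x = u 0 + RInt W 0 x.
Proof.
  assert (H1 : is_derive (fun m => pt m x) l (u x)).
  { apply Derive_correct; auto. }
  assert (H2 : is_derive (fun m => pt m 0 + RInt (fun t => dx pt m t) 0 x) l (u 0 + RInt W 0 x)).
  { apply (is_derive_plus (fun m => pt m 0) (fun m => RInt (fun t => dx pt m t) 0 x)).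
    - apply Derive_correct; auto.
    - apply (is_derive_RInt_param (dx pt) 0 x l).
      + generalize (loc_ab a b l Hl). apply filter_imp. intros m Hm t _. auto.
      + intros t _. apply cont2_2d. auto.
      + generalize (loc_ab a b l Hl). apply filter_imp. intros m Hm.
        apply (ex_RInt_continuous (V:=R_CompleteNormedModule)). intros z _. apply (Hpt_C1 m Hm z). }
  transitivity (Derive (fun m => pt m x) l).
  - symmetry. apply is_derive_unique. exact H1.
  - apply is_derive_unique. eapply is_derive_ext_loc; [|exact H2].
    generalize (loc_ab a b l Hl). apply filter_imp. intros m Hm.
    symmetry. apply stepA; auto.
Qed.



Lemma stepC x : is_derive u x (W x).
Proof.
  apply (is_derive_ext (fun y => u 0 + RInt W 0 y)).
  { intros t. symmetry. apply stepB. }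
  replace (W x) with (0 + W x) by ring.
  apply (is_derive_plus (fun _ => u 0) (fun y => RInt W 0 y)).
  - exact (is_derive_const (V:=R_NormedModule) (u 0) x).
  - apply (is_derive_RInt W (fun y => RInt W 0 y) 0 x).
    + apply filter_forall. intros y. apply (RInt_correct (V:=R_CompleteNormedModule)).
      apply (ex_RInt_continuous (V:=R_CompleteNormedModule)). intros; apply W_cont.
    + apply W_cont.
Qed.

Lemma u_mean : RInt u 0 1 = 0.
Proof.
  assert (H : is_derive (fun m => RInt (fun t => pt m t) 0 1) l (RInt u 0 1)).
  { apply (is_derive_RInt_param pt 0 1 l).
    + generalize (loc_ab a b l Hl). apply filter_imp. intros m Hm t _. auto.
    + intros t _. apply cont2_2d. auto.
    + generalize (loc_ab a b l Hl). apply filter_imp. intros m Hm.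
      apply (ex_RInt_continuous (V:=R_CompleteNormedModule)). intros z _.
      apply (ex_derive_continuous (V:=R_NormedModule)). apply (Hpt_C1 m Hm z). }
  transitivity (Derive (fun m => RInt (fun t => pt m t) 0 1) l).
  - symmetry. apply is_derive_unique. exact H.
  - apply is_derive_unique.
    apply (is_derive_ext_loc (fun _ => 0)).
    + generalize (loc_ab a b l Hl). apply filter_imp. intros m Hm.
      symmetry. apply (Hpt_mean m Hm).
    + exact (is_derive_const (V:=R_NormedModule) 0 l).
Qed.

Lemma u_zero : exists x0, 0 <= x0 <= 1 /\ u x0 = 0.
Proof.
  destruct (Classical_Prop.classic (exists x0, 0 <= x0 <= 1 /\ u x0 = 0)) as [H|H]; auto.
  exfalso.
  assert (Hc : continuity u).
  { intros y. apply continuity_pt_filterlim. apply u_cont. }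
  assert (Hn : forall y, 0 <= y <= 1 -> u y <> 0) by (intros y Hy E; apply H; eauto).
  assert (Hu0 := Hn 0 ltac:(lra)).
  destruct (Rdichotomy _ _ Hu0) as [Hneg|Hpos].
  - assert (Hlt : RInt u 0 1 < RInt (fun _ => 0) 0 1).
    { apply RInt_lt; [lra| intros; apply continuous_const | intros; apply u_cont |].
      intros y Hy. destruct (Rlt_or_le (u y) 0) as [?|Hge]; auto.
      exfalso. destruct (IVT_gen u 0 y 0 Hc) as [z [Hz Ez]].
      - apply Rmin_case_strong; apply Rmax_case_strong; intros; lra.
      - apply (Hn z); auto. revert Hz. apply Rmin_case_strong; apply Rmax_case_strong; intros; lra. }
    rewrite u_mean, RInt_const in Hlt. unfold scal in Hlt; simpl in Hlt. unfold mult in Hlt; simpl in Hlt. lra.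
  - assert (Hlt : 0 < RInt u 0 1).
    { apply RInt_gt_0; [lra| | intros; apply u_cont].
      intros y Hy. destruct (Rlt_or_le 0 (u y)) as [?|Hge]; auto.
      exfalso. destruct (IVT_gen u 0 y 0 Hc) as [z [Hz Ez]].
      - apply Rmin_case_strong; apply Rmax_case_strong; intros; lra.
      - apply (Hn z); auto. revert Hz. apply Rmin_case_strong; apply Rmax_case_strong; intros; lra. }
    rewrite u_mean in Hlt. lra.
Qed.

Lemma u_per x : u (x + 1) = u x.
Proof.
  unfold u, dlam. apply Derive_ext_loc.
  generalize (loc_ab a b l Hl). apply filter_imp. intros m Hm. apply (Hpt_per m Hm).
Qed.

Definition Ifun m := RInt (fun y => (pt m y) ^ 2) 0 1.

Lemma stepD
  (Hqt : forall l x, a < l < b ->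
     qt x = dx pt l x + (pt l x) ^ 2 - RInt (fun y => (pt l y) ^ 2) 0 1
            + 2 * s * pt l x) x :
  is_derive Ifun l (W x + 2 * pt l x * u x + 2 * s * u x).
Proof.
  assert (H1 : is_derive (fun m => dx pt m x) l (W x)).
  { apply Derive_correct; auto. }
  assert (H2 : is_derive (fun m => pt m x) l (u x)).
  { apply Derive_correct; auto. }
  assert (Hsq := is_derive_pow _ 2 _ _ H2).
  assert (Hs := is_derive_scal _ _ (2 * s) _ H2).
  assert (HF : is_derive (fun m => minus (plus (plus (dx pt m x) (pt m x ^ 2)) (2*s*pt m x)) (qt x)) l
     (minus (plus (plus (W x) (INR 2 * u x * pt l x ^ Nat.pred 2)) (2*s*u x)) 0)).
  { apply (is_derive_minus (fun m => plus (plus (dx pt m x) (pt m x ^ 2)) (2*s*pt m x)) (fun _ => qt x)).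
    - apply (is_derive_plus (fun m => plus (dx pt m x) (pt m x ^ 2)) (fun m => 2*s*pt m x)); auto.
      apply (is_derive_plus (fun m => dx pt m x) (fun m => pt m x ^ 2)); auto.
    - exact (is_derive_const (V:=R_NormedModule) (qt x) l). }
  replace (W x + 2 * pt l x * u x + 2 * s * u x) with
     (minus (plus (plus (W x) (INR 2 * u x * pt l x ^ Nat.pred 2)) (2*s*u x)) 0).
  2:{ unfold minus, plus, opp; simpl. ring. }
  refine (is_derive_ext_loc _ _ _ _ _ HF).
  generalize (loc_ab a b l Hl). apply filter_imp. intros m Hm.
  unfold minus, plus, opp; simpl. rewrite (Hqt m x Hm). unfold Ifun. ring.
Qed.

Lemma c_zero
  (Hqt : forall l x, a < l < b ->
     qt x = dx pt l x + (pt l x) ^ 2 - RInt (fun y => (pt l y) ^ 2) 0 1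
            + 2 * s * pt l x) :
  Derive Ifun l = 0.
Proof.
  set (c := Derive Ifun l).
  assert (Hc : forall x, c = W x + 2 * pt l x * u x + 2 * s * u x).
  { intros x. apply is_derive_unique. apply stepD; auto. }
  assert (Hpc : forall y, continuous (fun t => pt l t + s) y).
  { intros y. apply (continuous_plus (V:=R_NormedModule) (pt l) (fun _ => s)).
    - apply (ex_derive_continuous (V:=R_NormedModule)). apply (Hpt_C1 l Hl y).
    - apply continuous_const. }
  set (P := fun y => RInt (fun t => pt l t + s) 0 y).
  assert (HP : forall y, is_derive P y (pt l y + s)).
  { intros y. apply (is_derive_RInt (fun t => pt l t + s) P 0 y).
    - apply filter_forall. intros z. apply (RInt_correct (V:=R_CompleteNormedModule)).
      apply (ex_RInt_continuous (V:=R_CompleteNormedModule)). intros; apply Hpc.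
    - apply Hpc. }
  set (g := fun y => u y * exp (2 * P y)).
  assert (Hg : forall y, is_derive g y (c * exp (2 * P y))).
  { intros y.
    assert (HE : is_derive (fun z => exp (2 * P z)) y (scal (2 * (pt l y + s)) (exp (2 * P y)))).
    { apply (is_derive_comp exp (fun z => 2 * P z)).
      - apply is_derive_Reals. apply derivable_pt_lim_exp.
      - apply is_derive_scal. apply HP. }
    assert (HM := is_derive_mult u (fun z => exp (2 * P z)) y _ _ (stepC y) HE
                    ltac:(intros; unfold mult; simpl; ring)).
    rewrite (Hc y).
    replace ((W y + 2 * pt l y * u y + 2 * s * u y) * exp (2 * P y)) with
      (plus (mult (W y) (exp (2 * P y))) (mult (u y) (scal (2 * (pt l y + s)) (exp (2 * P y))))).
    2:{ unfold plus, mult, scal; simpl. unfold mult; simpl. ring. }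
    exact HM. }
  destruct u_zero as [x0 [Hx0 Ex0]].
  destruct (MVT_gen g x0 (x0 + 1) (fun y => c * exp (2 * P y))) as [xi [_ Hxi]].
  - intros; apply Hg.
  - intros y _. apply continuity_pt_filterlim.
    apply (ex_derive_continuous (V:=R_NormedModule)). eexists. apply Hg.
  - unfold g in Hxi. rewrite u_per, Ex0 in Hxi.
    assert (Hpos := exp_pos (2 * P xi)).
    assert (Hz : c * exp (2 * P xi) = 0) by nra.
    apply Rmult_integral in Hz. destruct Hz; [auto | lra].
Qed.
End S.

Theorem lemma1
  (s : R) (qt : R -> R) (a b : R) (q0 : R -> R) (pt : R -> R -> R)
  (* q~ continuous, 1-periodic, mean zero *)
  (Hqt_cont : forall x, continuous qt x)
  (Hqt_per : periodic1 qt)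
  (Hqt_mean : RInt qt 0 1 = 0)
  (* for lambda in (a,b): p~(lambda,.) is 1-periodic, C^1, mean zero *)
  (Hpt_per : forall l, a < l < b -> periodic1 (pt l))
  (Hpt_C1 : forall l, a < l < b -> isC1 (pt l))
  (Hpt_mean : forall l, a < l < b -> RInt (pt l) 0 1 = 0)
  (* differentiable dependence on lambda, with d_lambda p~ and d_lambda p~'
     existing and (jointly) continuous *)
  (Hpt_dl : forall l x, a < l < b -> ex_derive (fun m => pt m x) l)
  (Hpt_dl_cont : forall l x, a < l < b -> cont2 (dlam pt) l x)
  (Hpt_dlx : forall l x, a < l < b -> ex_derive (fun m => dx pt m x) l)
  (Hpt_dlx_cont : forall l x, a < l < b -> cont2 (dlam (dx pt)) l x)
  (* the two identities *)
  (Hq0 : forall l, a < l < b ->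
     q0 l = l + RInt (fun x => (pt l x) ^ 2) 0 1 + s ^ 2)
  (Hqt : forall l x, a < l < b ->
     qt x = dx pt l x + (pt l x) ^ 2 - RInt (fun y => (pt l y) ^ 2) 0 1
            + 2 * s * pt l x) :
  forall l, a < l < b -> is_derive q0 l 1.
Proof.
  intros l Hl.
  assert (HD := stepD s qt a b pt Hpt_dl Hpt_dlx l Hl Hqt 0).
  assert (HZ := c_zero s qt a b pt Hpt_per Hpt_C1 Hpt_mean Hpt_dl Hpt_dl_cont Hpt_dlx Hpt_dlx_cont l Hl Hqt).
  assert (HI : is_derive (Ifun pt) l 0).
  { rewrite <- HZ. rewrite (is_derive_unique _ _ _ HD). exact HD. }
  assert (HF : is_derive (fun m => plus (plus m (Ifun pt m)) (s ^ 2)) l (plus (plus 1 0) 0)).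
  { apply (is_derive_plus (fun m => plus m (Ifun pt m)) (fun _ => s ^ 2)).
    - apply (is_derive_plus (fun m => m) (Ifun pt)); auto. exact (is_derive_id (K:=R_AbsRing) l).
    - exact (is_derive_const (V:=R_NormedModule) (s ^ 2) l). }
  replace 1 with (plus (plus 1 0) 0) by (unfold plus; simpl; ring).
  refine (is_derive_ext_loc _ _ _ _ _ HF).
  generalize (loc_ab a b l Hl). apply filter_imp. intros m Hm.
  rewrite (Hq0 m Hm). unfold plus, Ifun; simpl. reflexivity.
Qed.
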